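(* Let $n\in\mathbb{N}_0$. The range of the operator $I+RM+MR$ on $\mathbb{P}^\perp_{n,n-1}(\widehat T)$ is exactly $\{p\in\mathbb{P}^\perp_{n,n-1}(\widehat T): RMp=p\}$.
   Context: $\widehat T$ is the triangle with vertices $(0,0),(1,0),(0,1)$; $\mathbb{P}^\perp_{0,-1}(\widehat T)=\mathbb{P}_0$ and for $n\ge1$, $\mathbb{P}^\perp_{n,n-1}(\widehat T)$ is the space of polynomials of total degree $\le n$ that are $L^2(\widehat T)$-orthogonal to all polynomials of degree $\le n-1$. The linear maps $M,R$ are $Mp(x_1,x_2):=p(1-x_1-x_2,x_2)$ and $Rp(x_1,x_2):=p(x_2,x_1)$; both are automorphisms of $\mathbb{P}^\perp_{n,n-1}(\widehat T)$, and $RM$, $MR$ denote operator compositions. *)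

(* Defs.v *)
From HB Require Import structures.
From mathcomp Require Import all_boot all_order all_algebra.
From mathcomp Require Import all_classical all_reals all_analysis.
Set Implicit Arguments. Unset Strict Implicit. Unset Printing Implicit Defensive.
Import Order.TTheory GRing.Theory Num.Theory.
Local Open Scope classical_set_scope.
Local Open Scope ring_scope.

Section Defs.
Variable R : realType.

Definition Tref : set (R * R) :=
  [set x | 0 <= x.1 /\ 0 <= x.2 /\ x.1 + x.2 <= 1].

Definition poly_le (n : nat) (p : R * R -> R) : Prop :=
  exists c : nat -> nat -> R, forall x : R * R,
    p x = \sum_(i < n.+1) \sum_(j < n.+1 | (i + j <= n)%N) c i j * x.1 ^+ i * x.2 ^+ j.

Definition L2T (p q : R * R -> R) : \bar R :=
  (\int[(@lebesgue_measure R \x @lebesgue_measure R)%E]_(x in Tref) (p x * q x)%:E)%E.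

(* P^perp_{n,n-1}(Tref); for n = 0 this is P_0 *)
Definition Pperp (n : nat) (p : R * R -> R) : Prop :=
  poly_le n p /\
  forall q, (0 < n)%N -> poly_le n.-1 q -> L2T p q = 0%E.

Definition Mop (p : R * R -> R) : R * R -> R := fun x => p (1 - x.1 - x.2, x.2).
Definition Rop (p : R * R -> R) : R * R -> R := fun x => p (x.2, x.1).
End Defs.

(* Main.v *)
Require Import Defs.
From HB Require Import structures.
From mathcomp Require Import all_boot all_order all_algebra.
From mathcomp Require Import all_classical all_reals all_analysis.
From mathcomp Require Import measurable_realfun ring lra zify.
Import Order.TTheory GRing.Theory Num.Theory.
Local Open Scope classical_set_scope.
Local Open Scope ring_scope.

Section Refl.
Variable R : realType.
Let mu := @lebesgue_measure R.
Variable c : R.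

Lemma refl_meas : measurable_fun setT (fun x : R => c - x).
Proof. by apply: measurable_funB. Qed.

Definition reflm : set (measurableTypeR R) -> \bar R := pushforward mu (fun x : R => c - x).

Let r0 : reflm set0 = 0%E.
Proof. by rewrite /reflm /pushforward preimage_set0; exact: measure0. Qed.

Let rge0 A : (0 <= reflm A)%E.
Proof. rewrite /reflm /pushforward; exact: measure_ge0. Qed.

Let rsa : semi_sigma_additive reflm.
Proof.
move=> F mF tF mUF; rewrite /reflm /pushforward preimage_bigcup.
apply: measure_semi_sigma_additive.
- by move=> n; rewrite -[X in measurable X]setTI; apply: refl_meas => //; exact: mF.
- apply/trivIsetP => /= i j _ _ ij; rewrite -preimage_setI.
  by move/trivIsetP : tF => /(_ _ _ _ _ ij) ->//; rewrite preimage_set0.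
- by rewrite -preimage_bigcup -[X in measurable X]setTI; apply: refl_meas.
Qed.

HB.instance Definition _ := isMeasure.Build _ _ _ reflm r0 rge0 rsa.

Lemma refl_push (A : set R) : measurable A -> reflm A = mu A.
Proof.
move=> mA; apply/esym.
have := @lebesgue_measure_unique R reflm.
apply => // X [[a b] _ <-] /=.
rewrite /reflm /pushforward.
have -> : (fun x : R => c - x) @^-1` `]a, b] = `[c - b, c - a[%classic.
  apply/seteqP; split => x /=; rewrite !in_itv /=.
    move=> /andP[h1 h2]; apply/andP; split; lra.
  move=> /andP[h1 h2]; apply/andP; split; lra.
rewrite /mu !lebesgue_measure_itv /= !lte_fin.
case: (ltP a b) => ab; case: (ltP (c - b) (c - a)) => ab2 //.
- by rewrite -EFinD; congr (_%:E); ring.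
- exfalso; lra.
- exfalso; lra.
Qed.

Lemma refl_int (f : R -> \bar R) : measurable_fun setT f -> (forall x, 0 <= f x)%E ->
  (\int[mu]_x f (c - x)%R = \int[mu]_x f x)%E.
Proof.
move=> mf f0.
transitivity (\int[reflm]_(x in setT) f x)%E; last first.
  by apply: eq_measure_integral => A mA _; exact: refl_push.
rewrite /reflm ge0_integral_pushforward //; last exact: refl_meas.

Qed.
End Refl.

Section CV.
Variable R : realType.
Local Notation mu := (@lebesgue_measure R).
Local Notation P := (mu \x mu)%E.

Lemma swap_int (g : R * R -> \bar R) : measurable_fun setT g -> (forall x, 0 <= g x)%E ->
  (\int[P]_x g (x.2, x.1) = \int[P]_x g x)%E.
Proof.
move=> mg g0.
have h1 := @fubini_tonelli1 _ _ _ _ R mu mu (fun x => g (x.2, x.1)).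
rewrite h1 //; last first.
  by apply: measurableT_comp => //; exact: measurable_swap.
by rewrite (@fubini_tonelli2 _ _ _ _ R mu mu g).
Qed.

Lemma M_int (g : R * R -> \bar R) : measurable_fun setT g -> (forall x, 0 <= g x)%E ->
  (\int[P]_x g ((1 - x.1 - x.2)%R, x.2) = \int[P]_x g x)%E.
Proof.
move=> mg g0.
rewrite (@fubini_tonelli2 _ _ _ _ R mu mu (fun x => g ((1 - x.1 - x.2)%R, x.2))) //; last first.
  apply: (measurableT_comp mg); apply: measurable_fun_pair => //.
  apply: measurable_funB => //; apply: measurable_funB => //.
rewrite (@fubini_tonelli2 _ _ _ _ R mu mu g) //.
apply: eq_integral => y _; rewrite /fubini_G /=.
transitivity (\int[mu]_x (fun t => g (t, y)) ((1 - y) - x)%R)%E.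
  by apply: eq_integral => x _ /=; congr (g (_, _)); ring.
apply: refl_int => //.
exact: measurable_fun_pair1.
Qed.

Definition Sx (x : R * R) : R * R := ((1 - x.2 - x.1)%R, x.1).

Lemma M'_meas : measurable_fun setT (fun x : R * R => ((1 - x.1 - x.2)%R, x.2)).
Proof.
apply: measurable_fun_pair => //.
by apply: measurable_funB => //; apply: measurable_funB => //.
Qed.

Lemma S_int (g : R * R -> \bar R) : measurable_fun setT g -> (forall x, 0 <= g x)%E ->
  (\int[P]_x g (Sx x) = \int[P]_x g x)%E.
Proof.
move=> mg g0.
rewrite (swap_int (fun y => g ((1 - y.1 - y.2)%R, y.2))) //.
  exact: M_int.
exact: measurableT_comp mg M'_meas.
Qed.

Lemma Tref_S x : Tref (Sx x) <-> Tref x.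
Proof.
rewrite /Tref /Sx /=; split => -[h1 [h2 h3]]; (split; [lra | split; lra]).
Qed.

Lemma Tref_meas : measurable (@Tref R).
Proof.
have -> : (@Tref R) = fst @^-1` `[0%R, +oo[ `&` (snd @^-1` `[0%R, +oo[ `&`
   (fun x : R * R => x.1 + x.2)%R @^-1` `]-oo, 1%R]).
  apply/seteqP; split => x /=; rewrite /Tref /= !in_itv /= ?andbT.
    by move=> [-> [-> ->]].
  by move=> [-> [-> ->]].
apply: measurableI.
  by rewrite -[X in measurable X]setTI; apply: measurable_fst.
apply: measurableI.
  by rewrite -[X in measurable X]setTI; apply: measurable_snd.
by rewrite -[X in measurable X]setTI; apply: measurable_funD.
Qed.

Lemma ST_int_ge0 (k h : R * R -> \bar R) : measurable_fun setT h -> (forall x, 0 <= h x)%E ->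
  (forall x, k x = h (Sx x)) ->
  (\int[P]_(x in (@Tref R)) k x = \int[P]_(x in (@Tref R)) h x)%E.
Proof.
move=> mg g0 kh.
rewrite integral_mkcond [in RHS]integral_mkcond.
have -> : k \_ (@Tref R) = fun x => (h \_ (@Tref R)) (Sx x).
  apply/funext => x; rewrite /patch kh.
  have -> : (Sx x \in (@Tref R)) = (x \in (@Tref R)).
    by apply/idP/idP => /[!in_setE] hh; [apply/(Tref_S x) | apply/(Tref_S x)].
  by [].
apply: S_int.
  apply/(measurable_restrictT _ Tref_meas); exact: (measurable_funS measurableT (@subsetT _ _) mg).
move=> x; rewrite /patch; case: ifP => //.
Qed.

Lemma ST_int (g : R * R -> \bar R) : measurable_fun setT g ->
  (\int[P]_(x in (@Tref R)) g (Sx x) = \int[P]_(x in (@Tref R)) g x)%E.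
Proof.
move=> mg.
rewrite integralE [in RHS]integralE.
congr (_ - _)%E.
  apply: ST_int_ge0; first exact: measurable_funepos.
    by move=> x; exact: funepos_ge0.
  by move=> x; rewrite !funeposE.
apply: ST_int_ge0; first exact: measurable_funeneg.
  by move=> x; exact: funeneg_ge0.
by move=> x; rewrite !funenegE.
Qed.
End CV.

Arguments Sx {R}.
Set Implicit Arguments. Unset Strict Implicit.

Section Main.
Variable R : realType.
Local Notation mu := (@lebesgue_measure R).
Local Notation P := (mu \x mu)%E.

Definition PL (n : nat) (p : R * R -> R) := exists c : nat -> nat -> R,
  (forall i j, (n < i + j)%N -> c i j = 0) /\
  forall x, p x = \sum_(i < n.+1) \sum_(j < n.+1) c i j * x.1 ^+ i * x.2 ^+ j.

Lemma PL_poly_le n p : PL n p <-> poly_le n p.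
Proof.
split.
  case=> c [c0 hp]; exists c => x; rewrite hp; apply: eq_bigr => i _.
  rewrite [RHS]big_mkcond; apply: eq_bigr => j _.
  case: leqP => // h; by rewrite c0 // !mul0r.
case=> c hp; exists (fun i j => if (i + j <= n)%N then c i j else 0); split.
  by move=> i j h; rewrite leqNgt h.
move=> x; rewrite hp; apply: eq_bigr => i _.
rewrite [LHS]big_mkcond; apply: eq_bigr => j _.
by case: ifP => //; rewrite !mul0r.
Qed.

Lemma PL_const k : PL 0 (fun _ => k).
Proof.
exists (fun i j => if ((i == 0) && (j == 0))%N then k else 0); split.
  by move=> [|i] [|j].
by move=> x; rewrite !big_ord1 /= !expr0 !mulr1.
Qed.

Lemma PL_zero n : PL n (fun _ => 0).
Proof.
exists (fun _ _ => 0); split => // x.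
by rewrite big1 // => i _; rewrite big1 // => j _; rewrite !mul0r.
Qed.

Lemma PL_S1 n p : PL n p -> PL n.+1 p.
Proof.
case=> c [c0 hp]; exists c; split.
  move=> i j h; have h2 : (n < i + j)%N by lia. exact: c0 h2.
move=> x; rewrite hp (big_ord_recr n.+1) /=.
have -> : \sum_(j < n.+2) c n.+1 j * x.1 ^+ n.+1 * x.2 ^+ j = 0.
  by apply: big1 => j _; rewrite c0 ?mul0r //; lia.
rewrite addr0; apply: eq_bigr => i _; rewrite (big_ord_recr n.+1) /= c0 ?mul0r ?addr0 //.
case: i => i /= hi; lia.
Qed.

Lemma PL_le m n p : (m <= n)%N -> PL m p -> PL n p.
Proof.
move=> /subnK <-; elim: (n - m)%N => [|k IH] // h.
by rewrite addSn; apply: PL_S1; apply: IH.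
Qed.

Lemma PL_add n p q : PL n p -> PL n q -> PL n (fun x => p x + q x).
Proof.
case=> c [c0 hp]; case=> d [d0 hq].
exists (fun i j => c i j + d i j); split.
  by move=> i j h; rewrite c0 // d0 // addr0.
move=> x; rewrite hp hq -big_split; apply: eq_bigr => i _.
rewrite -big_split; apply: eq_bigr => j _ /=; ring.
Qed.

Lemma PL_scale n k p : PL n p -> PL n (fun x => k * p x).
Proof.
case=> c [c0 hp]; exists (fun i j => k * c i j); split.
  by move=> i j h; rewrite c0 // mulr0.
move=> x; rewrite hp mulr_sumr; apply: eq_bigr => i _.
rewrite mulr_sumr; apply: eq_bigr => j _ /=; ring.
Qed.

Lemma PL_X1 n p : PL n p -> PL n.+1 (fun x => x.1 * p x).
Proof.
case=> c [c0 hp].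
exists (fun i j => if i is i'.+1 then c i' j else 0); split.
  move=> [|i] j h //; have h2 : (n < i + j)%N by lia. exact: c0 h2.
move=> x; rewrite hp (big_ord_recl n.+1) /=.
rewrite [X in _ = X + _]big1 ?add0r; last first.
  by move=> j _; rewrite !mul0r.
rewrite mulr_sumr; apply: eq_bigr => i _.
have bi : bump 0 i = i.+1 by rewrite /bump leq0n add1n.
rewrite bi (big_ord_recr n.+1) /= c0 ?mul0r ?addr0; last first.
  by clear bi; case: i => i /= hi; lia.
rewrite mulr_sumr; apply: eq_bigr => j _ /=.
rewrite exprS; ring.
Qed.

Lemma PL_X2 n p : PL n p -> PL n.+1 (fun x => x.2 * p x).
Proof.
case=> c [c0 hp].
exists (fun i j => if j is j'.+1 then c i j' else 0); split.
  move=> i [|j] h //; have h2 : (n < i + j)%N by lia. exact: c0 h2.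
move=> x; rewrite hp (big_ord_recr n.+1) /=.
rewrite [X in _ = _ + X]big1 ?addr0; last first.
  move=> [[|j] hj] _ /=; first by rewrite !mul0r.
  by rewrite c0 ?mul0r //; lia.
rewrite mulr_sumr; apply: eq_bigr => i _.
rewrite (big_ord_recl n.+1) /= !mul0r add0r.
rewrite mulr_sumr; apply: eq_bigr => j _ /=.
have bj : bump 0 j = j.+1 by rewrite /bump leq0n add1n.
rewrite bj exprS; ring.
Qed.

Lemma PL_ext n p q : (forall x, p x = q x) -> PL n p -> PL n q.
Proof. by move=> h; rewrite (_ : q = p) //; apply/funext => x; rewrite h. Qed.

Lemma PL_sum n m (F : nat -> R * R -> R) : (forall i, PL n (F i)) ->
  PL n (fun x => \sum_(i < m) F i x).
Proof.
move=> hF; elim: m => [|m IH].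
  by apply: (PL_ext _ (PL_zero n)) => x; rewrite big_ord0.
apply: (PL_ext _ (PL_add IH (hF m))) => x.
by rewrite big_ord_recr.
Qed.

Lemma PL_L n p : PL n p -> PL n.+1 (fun x => (1 - x.2 - x.1) * p x).
Proof.
move=> h.
apply: (PL_ext _ (PL_add (PL_add (PL_S1 h) (PL_scale (-1) (PL_X2 h)))
                      (PL_scale (-1) (PL_X1 h)))) => x /=.
ring.
Qed.

Lemma PL_term i j : PL (i + j) (fun x : R * R => (1 - x.2 - x.1) ^+ i * x.1 ^+ j).
Proof.
elim: i => [|i IH] /=.
  elim: j => [|j IH].
    by apply: (PL_ext _ (PL_const 1)) => x; rewrite !expr0 mulr1.
  apply: (PL_ext _ (PL_X1 IH)) => x /=; rewrite !expr0 !mul1r exprS //.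
rewrite addSn; apply: (PL_ext _ (PL_L IH)) => x /=.
by rewrite exprS mulrA.
Qed.


Lemma PL_S n p : PL n p -> PL n (fun x => p (Sx x)).
Proof.
case=> c [c0 hp].
apply: (PL_ext (p := fun x => \sum_(i < n.+1) \sum_(j < n.+1)
   c i j * ((1 - x.2 - x.1) ^+ i * x.1 ^+ j))).
  by move=> x; rewrite hp /Sx /=; apply: eq_bigr => i _; apply: eq_bigr => j _; rewrite mulrA.
apply: (@PL_sum n n.+1 (fun (i : nat) x => \sum_(j < n.+1) c i j * ((1 - x.2 - x.1) ^+ i * x.1 ^+ j))) => i.
apply: (@PL_sum n n.+1 (fun (j : nat) x => c i j * ((1 - x.2 - x.1) ^+ i * x.1 ^+ j))) => j.
case: (leqP (i + j) n) => h.
  exact: PL_le h (PL_scale _ (PL_term i j)).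
by apply: (PL_ext _ (PL_zero n)) => x; rewrite c0 // mul0r.
Qed.

Lemma Sx3 (x : R * R) : Sx (Sx (Sx x)) = x.
Proof. case: x => a b; rewrite /Sx /=; congr (_, _); ring. Qed.

Lemma Sx_meas : measurable_fun setT (@Sx R).
Proof.
apply: measurable_fun_pair => //.
by apply: measurable_funB => //; apply: measurable_funB => //.
Qed.

Lemma PL_meas n p : PL n p -> measurable_fun setT p.
Proof.
case=> c [_ hp].
rewrite (_ : p = fun x => \sum_(i < n.+1) \sum_(j < n.+1) c i j * x.1 ^+ i * x.2 ^+ j); last first.
  by apply/funext => x; rewrite hp.
apply: measurable_sum => i; apply: measurable_sum => j.
apply: measurable_funM; first apply: measurable_funM => //.
  by apply: measurable_funX.
by apply: measurable_funX.
Qed.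

Lemma PL_bnd n p : PL n p -> exists C : R, forall x, Tref x -> `|p x| <= C.
Proof.
case=> c [_ hp]; exists (\sum_(i < n.+1) \sum_(j < n.+1) `|c i j|) => x [h1 [h2 h3]].
rewrite hp; apply: (le_trans (ler_norm_sum _ _ _)); apply: ler_sum => i _.
apply: (le_trans (ler_norm_sum _ _ _)); apply: ler_sum => j _.
rewrite !normrM !normrX -mulrA; apply: ler_piMr => //.
apply: mulr_ile1; rewrite ?exprn_ge0 // exprn_ile1 //; rewrite ger0_norm //; lra.
Qed.

Lemma PT_fin : (P (@Tref R) < +oo)%E.
Proof.
apply: (@le_lt_trans _ _ (P (`[0%R, 1%R]%classic `*` `[0%R, 1%R]%classic))).
  apply: le_measure; rewrite ?inE //.
  - exact: Tref_meas.
  - by apply: measurableX.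
  - move=> x [h1 [h2 h3]]; split => /=; rewrite in_itv /=; apply/andP; split; lra.
rewrite product_measure1E //.
have h : (@lebesgue_measure R `[0%R, 1%R]%classic = 1%:E).
  by rewrite lebesgue_measure_itv /= lte_fin ltr01 -EFinD subr0.
change ((@lebesgue_measure R `[0%R, 1%R]%classic) * (@lebesgue_measure R `[0%R, 1%R]%classic) < +oo)%E.
by rewrite h mule1 ltry.
Qed.

Lemma PL_int n m p q : PL n p -> PL m q ->
  P.-integrable (@Tref R) (EFin \o (fun x => p x * q x)).
Proof.
move=> hp hq.
apply: measurable_bounded_integrable.
- exact: Tref_meas.
- exact: PT_fin.
- apply: (measurable_funS measurableT (@subsetT _ _)).
  by apply: measurable_funM; [exact: PL_meas hp | exact: PL_meas hq].
- have [C1 hC1] := PL_bnd hp; have [C2 hC2] := PL_bnd hq.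
  exists (C1 * C2); split; first exact: num_real.
  move=> M hM x Tx /=; rewrite normrM.
  apply: le_trans (ltW hM).
  apply: ler_pM => //; [exact: hC1 | exact: hC2].
Qed.

Lemma L2T_add3 n a b c r : PL n a -> PL n b -> PL n c -> PL n r ->
  L2T (fun x => a x + b x + c x) r = (L2T a r + L2T b r + L2T c r)%E.
Proof.
move=> ha hb hc hr; rewrite /L2T.
have ia := PL_int ha hr; have ib := PL_int hb hr; have ic := PL_int hc hr.
rewrite -(integralD _ ia ib); last exact: Tref_meas.
rewrite -(integralD _ (integrableD _ ia ib) ic); [|exact: Tref_meas|exact: Tref_meas].
apply: eq_integral => x _; rewrite /= -!EFinD; congr (_%:E); ring.
Qed.

Lemma L2T_scale n k p r : PL n p -> PL n r ->
  L2T (fun x => k * p x) r = (k%:E * L2T p r)%E.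
Proof.
move=> hp hr; rewrite /L2T -(integralZl _ (PL_int hp hr)); last exact: Tref_meas.
apply: eq_integral => x _; rewrite /= -EFinM; congr (_%:E); ring.
Qed.

Lemma L2T_S n m p r : PL n p -> PL m r ->
  L2T (fun x => p (Sx x)) r = L2T p (fun x => r (Sx (Sx x))).
Proof.
move=> hp hr; rewrite /L2T.
rewrite -(@ST_int R (fun y => (p y * r (Sx (Sx y)))%:E)).
  by apply: eq_integral => x _; rewrite Sx3.
apply/measurable_EFinP; apply: measurable_funM; first exact: PL_meas hp.
exact: (PL_meas (PL_S (PL_S hr))).
Qed.
End Main.

Theorem proposition16 (R : realType) (n : nat) :
  [set p | exists2 q, Pperp n q &
             p = (fun x => q x + Rop (Mop q) x + Mop (Rop q) x)]
  = [set p : R * R -> R | Pperp n p /\ Rop (Mop p) = p].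
Proof.
have RM (q : R * R -> R) : Rop (Mop q) = (fun x => q (Sx x)) by [].
have MR (q : R * R -> R) : Mop (Rop q) = (fun x => q (Sx (Sx x))).
  by apply/funext => x; rewrite /Mop /Rop /Sx /=; congr q; congr (_, _); ring.
apply/seteqP; split => p /=.
- case=> q [hql hqo] ->; rewrite RM MR.
  have hq : PL n q by apply/PL_poly_le.
  split; first split.
  + apply/PL_poly_le; apply: PL_add; first apply: PL_add.
    * exact: hq.
    * exact: PL_S hq.
    * exact: PL_S (PL_S hq).
  + move=> r n0 /PL_poly_le hr.
    have hr' : PL n r by apply: PL_le hr; exact: leq_pred.
    rewrite (L2T_add3 hq (PL_S hq) (PL_S (PL_S hq)) hr').
    have e2 : L2T (fun x => q (Sx x)) r = L2T q (fun x => r (Sx (Sx x))).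
      exact: (L2T_S hq hr).
    have e3 : L2T (fun x => q (Sx (Sx x))) r =
              L2T q (fun x => r (Sx (Sx (Sx (Sx x))))).
      exact: (etrans (L2T_S (PL_S hq) hr) (L2T_S hq (PL_S (PL_S hr)))).
    rewrite e2 e3 !hqo //; first by rewrite !adde0.
    * by apply/PL_poly_le; exact: (PL_S (PL_S (PL_S (PL_S hr)))).
    * by apply/PL_poly_le; exact: (PL_S (PL_S hr)).
    * by apply/PL_poly_le.
  + rewrite RM; apply/funext => x /=; rewrite Sx3; ring.
- case=> [[hpl hpo] hS].
  have hp : PL n p by apply/PL_poly_le.
  exists (fun x => 3^-1 * p x).
    split; first by apply/PL_poly_le; exact: PL_scale.
    move=> r n0 /PL_poly_le hr.
    have hr' : PL n r by apply: PL_le hr; exact: leq_pred.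
    rewrite (L2T_scale _ hp hr') hpo ?mule0 //.
    by apply/PL_poly_le.
  rewrite RM MR; apply/funext => x.
  have e1 : forall y, p (Sx y) = p y by move=> y; exact: (congr1 (fun f => f y) hS).
  rewrite /= !e1; lra.
Qed.
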